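(* Let $\mathcal L$ be a purely resolving class of left $R$-modules. Then every $\mathcal L$-atomic module belonging to $\mathcal L$ is Mittag-Leffler.
   Context: $R$ is a ring with $1$; modules are left $R$-modules. pp formulas, ${\rm pp}_M(\bar m)$ as usual; for a class $\mathcal X$, $\phi\le_{\mathcal X}\psi$ means $\phi(X)\subseteq\psi(X)$ for all $X\in\mathcal X$. $M$ is $\mathcal X$-atomic if for every finite tuple $\bar m$ in $M$ there is $\phi\in{\rm pp}_M(\bar m)$ with $\phi\le_{\mathcal X}\psi$ for all $\psi\in{\rm pp}_M(\bar m)$. A module is Mittag-Leffler iff it is $R\text{-Mod}$-atomic (this characterization may serve as definition). A module is purely generated by $\mathcal B$ if it is a pure-epimorphic image of a direct sum of modules from $\mathcal B$; $\mathrm{PGen}\,\mathcal B$ is the class of all such; a class is purely resolving if it equals $\mathrm{PGen}\,\mathcal B$ for some class $\mathcal B$ of pure-projective modules closed under finite direct sums. *)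

(* Defs.v *)
From HB Require Import structures.
From mathcomp Require Import all_boot all_order all_algebra.
Unset Printing Implicit Defensive.
Import GRing.Theory.
Local Open Scope ring_scope.

Section ModTheory.
Variable R : pzRingType.

Definition is_linear {U V : lmodType R} (f : U -> V) : Prop :=
  forall (a : R) (x y : U), f (a *: x + y) = a *: f x + f y.

(* A pp formula phi(x_0..x_{n-1}) := exists y_0..y_{m-1},
   /\_{i<k} sum_j A i j x_j + sum_l B i l y_l = 0. *)
Record ppf (n : nat) := PPF {

  pp_k : nat; pp_m : nat;
  pp_A : 'M[R]_(pp_k, n);
  pp_B : 'M[R]_(pp_k, pp_m) }.
Arguments pp_k {n}. Arguments pp_m {n}. Arguments pp_A {n}. Arguments pp_B {n}.

Definition pp_eqs {n} (phi : ppf n) {M : lmodType R}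
  (x : 'I_n -> M) (y : 'I_(pp_m phi) -> M) : Prop :=
  forall i : 'I_(pp_k phi),
    \sum_(j < n) pp_A phi i j *: x j + \sum_(l < pp_m phi) pp_B phi i l *: y l = 0.

Definition pp_holds {n} (phi : ppf n) {M : lmodType R} (x : 'I_n -> M) : Prop :=
  exists y : 'I_(pp_m phi) -> M, pp_eqs phi x y.

Definition mclass := lmodType R -> Prop.

Definition pp_le (X : mclass) {n} (phi psi : ppf n) : Prop :=
  forall N : lmodType R, X N -> forall x : 'I_n -> N, pp_holds phi x -> pp_holds psi x.

Definition atomic (X : mclass) (M : lmodType R) : Prop :=
  forall n (m : 'I_n -> M), exists phi : ppf n,
    pp_holds phi m /\ forall psi : ppf n, pp_holds psi m -> pp_le X phi psi.

Definition mittag_leffler (M : lmodType R) : Prop := atomic (fun _ => True) M.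

(* pure epimorphism: a surjective linear map whose kernel is a pure submodule *)
Definition pure_epi {U V : lmodType R} (p : U -> V) : Prop :=
  [/\ is_linear p, (forall v, exists u, p u = v) &
      forall n (phi : ppf n) (a : 'I_n -> U), (forall j, p (a j) = 0) ->
        pp_holds phi a ->
        exists y : 'I_(pp_m phi) -> U, (forall l, p (y l) = 0) /\ pp_eqs phi a y].

Definition pure_projective (P : lmodType R) : Prop :=
  forall (U V : lmodType R) (g : U -> V), pure_epi g ->
  forall f : P -> V, is_linear f ->
  exists h : P -> U, is_linear h /\ forall x, g (h x) = f x.

Definition is_dsum {I : Type} {B : I -> lmodType R} {S : lmodType R}
  (iota : forall i, B i -> S) : Prop :=
  (forall i, is_linear (iota i)) /\
  forall (N : lmodType R) (f : forall i, B i -> N), (forall i, is_linear (f i)) ->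
    exists g : S -> N, [/\ is_linear g, (forall i x, g (iota i x) = f i x) &
      forall g' : S -> N, is_linear g' -> (forall i x, g' (iota i x) = f i x) ->
        forall s, g' s = g s].

Definition PGen (Bc : mclass) : mclass := fun M =>
  exists (I : Type) (B : I -> lmodType R) (S : lmodType R)
         (iota : forall i, B i -> S) (p : S -> M),
    (forall i, Bc (B i)) /\ is_dsum iota /\ pure_epi p.

Definition fin_dsum_closed (Bc : mclass) : Prop :=
  forall (I : finType) (B : I -> lmodType R) (S : lmodType R)
         (iota : forall i, B i -> S),
    (forall i, Bc (B i)) -> is_dsum iota -> Bc S.

Definition purely_resolving (L : mclass) : Prop :=
  exists Bc : mclass,
    [/\ forall P, Bc P -> pure_projective P, fin_dsum_closed Bc &
        forall M, L M <-> PGen Bc M].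

End ModTheory.
Arguments purely_resolving {R}. Arguments atomic {R}. Arguments mittag_leffler {R}.
Arguments PGen {R}. Arguments pure_projective {R}. Arguments fin_dsum_closed {R}.
Arguments pp_le {R}. Arguments pp_holds {R n}. Arguments pp_eqs {R n}. Arguments pure_epi {R U V}.
Arguments is_dsum {R I B S}. Arguments is_linear {R U V}.

(* Main.v *)
From HB Require Import structures.
Require Import Defs.
From mathcomp Require Import all_boot all_order all_algebra.
From mathcomp Require Import boolp.
Unset Printing Implicit Defensive.
Import GRing.Theory.
Local Open Scope ring_scope.
Set Implicit Arguments. Unset Strict Implicit.

Section DProd.
Variables (R : pzRingType) (I : Type) (N : I -> lmodType R).
Definition dprod := forall i, N i.
HB.instance Definition _ := gen_eqMixin dprod.
HB.instance Definition _ := gen_choiceMixin dprod.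
Definition dp0 : dprod := fun i => 0.
Definition dpopp (x : dprod) : dprod := fun i => - x i.
Definition dpadd (x y : dprod) : dprod := fun i => x i + y i.
Definition dpscale (a : R) (x : dprod) : dprod := fun i => a *: x i.
Lemma dp_addA : associative dpadd.
Proof. by move=> x y z; apply: functional_extensionality_dep => i; rewrite /dpadd addrA. Qed.
Lemma dp_addC : commutative dpadd.
Proof. by move=> x y; apply: functional_extensionality_dep => i; rewrite /dpadd addrC. Qed.
Lemma dp_add0 : left_id dp0 dpadd.
Proof. by move=> x; apply: functional_extensionality_dep => i; rewrite /dpadd add0r. Qed.
Lemma dp_addN : left_inverse dp0 dpopp dpadd.
Proof. by move=> x; apply: functional_extensionality_dep => i; rewrite /dpadd /dpopp addNr. Qed.
HB.instance Definition _ := GRing.isZmodule.Build dprod dp_addA dp_addC dp_add0 dp_addN.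
Lemma dp_scA a b v : dpscale a (dpscale b v) = dpscale (a * b) v.
Proof. by apply: functional_extensionality_dep => i; rewrite /dpscale scalerA. Qed.
Lemma dp_sc1 : left_id 1 dpscale.
Proof. by move=> v; apply: functional_extensionality_dep => i; rewrite /dpscale scale1r. Qed.
Lemma dp_scDr : right_distributive dpscale +%R.
Proof. by move=> a x y; apply: functional_extensionality_dep => i; rewrite /dpscale scalerDr. Qed.
Lemma dp_scDl v : {morph dpscale^~ v: a b / a + b}.
Proof. by move=> a b; apply: functional_extensionality_dep => i; rewrite /dpscale scalerDl. Qed.
HB.instance Definition _ := GRing.Zmodule_isLmodule.Build R dprod dp_scA dp_sc1 dp_scDr dp_scDl.
Lemma dpE_add (x y : dprod) i : (x + y) i = x i + y i. Proof. by []. Qed.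
Lemma dpE_scale a (x : dprod) i : (a *: x) i = a *: x i. Proof. by []. Qed.
Lemma dpE_0 i : (0 : dprod) i = 0. Proof. by []. Qed.
End DProd.

Section Sub.
Variables (R : pzRingType) (D : lmodType R) (Q : D -> Prop).
Hypotheses (Q0 : Q 0) (QD : forall a x y, Q x -> Q y -> Q (a *: x + y)).
Definition subm := let _ := Q0 in let _ := QD in {x : D | `[< Q x >]}.
HB.instance Definition _ := gen_eqMixin subm.
HB.instance Definition _ := gen_choiceMixin subm.
Definition smv (x : subm) : D := proj1_sig x.
Lemma Q0b : `[< Q 0 >]. Proof. exact/asboolP. Qed.
Lemma QDb a (x y : subm) : `[< Q (a *: smv x + smv y) >].
Proof.
have Hx := proj2_sig x; have Hy := proj2_sig y.
move/asboolP: Hx => Hx; move/asboolP: Hy => Hy.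
by apply/asboolP; apply: QD. Qed.
Definition smk (z : D) (p : `[< Q z >]) : subm := exist (fun z => `[< Q z >]) z p.
Definition sm0 : subm := smk Q0b.
Definition smadd (x y : subm) : subm := smk (QDb 1 x y).
Definition smscale a (x : subm) : subm := smk (QDb a x sm0).
Definition smopp (x : subm) := smscale (-1) x.
Lemma sm_inj (x y : subm) : smv x = smv y -> x = y.
Proof.
case: x => x px; case: y => y py /= E; subst y.
by congr exist; apply: bool_irrelevance.
Qed.
Lemma sm_addA : associative smadd.
Proof. by move=> x y z; apply: sm_inj => /=; rewrite !scale1r addrA. Qed.
Lemma sm_addC : commutative smadd.
Proof. by move=> x y; apply: sm_inj => /=; rewrite !scale1r addrC. Qed.
Lemma sm_add0 : left_id sm0 smadd.
Proof. by move=> x; apply: sm_inj => /=; rewrite scale1r add0r. Qed.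
Lemma sm_addN : left_inverse sm0 smopp smadd.
Proof. by move=> x; apply: sm_inj => /=; rewrite scale1r addr0 scaleN1r addNr. Qed.
HB.instance Definition _ := GRing.isZmodule.Build subm sm_addA sm_addC sm_add0 sm_addN.
Lemma sm_scA a b v : smscale a (smscale b v) = smscale (a * b) v.
Proof. by apply: sm_inj => /=; rewrite !addr0 scalerA. Qed.
Lemma sm_sc1 : left_id 1 smscale.
Proof. by move=> v; apply: sm_inj => /=; rewrite addr0 scale1r. Qed.
Lemma sm_scDr : right_distributive smscale +%R.
Proof. by move=> a x y; apply: sm_inj => /=; rewrite !addr0 !scale1r scalerDr. Qed.
Lemma sm_scDl v : {morph smscale^~ v: a b / a + b}.
Proof. by move=> a b; apply: sm_inj => /=; rewrite !addr0 scale1r scalerDl. Qed.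
HB.instance Definition _ := GRing.Zmodule_isLmodule.Build R subm sm_scA sm_sc1 sm_scDr sm_scDl.
Lemma smval_add (x y : subm) : smv (x + y) = smv x + smv y.
Proof. by rewrite /= scale1r. Qed.
Lemma smval_scale a (x : subm) : smv (a *: x) = a *: smv x.
Proof. by rewrite /= addr0. Qed.
Lemma smval_0 : smv (0 : subm) = 0. Proof. by []. Qed.
End Sub.
Arguments subm {R D Q}. Arguments smv {R D Q Q0 QD}. Arguments sm_inj {R D Q Q0 QD}.
Arguments smk {R D Q Q0 QD}.

Lemma evalD_sum (R : pzRingType) (I : Type) (N : I -> lmodType R) (J : Type) (r : seq J)
  (Pr : pred J) (F : J -> dprod N) (x : I) :
  (\sum_(j <- r | Pr j) F j) x = \sum_(j <- r | Pr j) F j x.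
Proof. by apply: (big_morph (fun f : dprod N => f x)). Qed.

Unset Implicit Arguments.
Set Strict Implicit.

Notation PH phi x := (pp_holds phi _ x).
Notation PE phi x y := (pp_eqs phi _ x y).
Notation ppm phi := (pp_m _ _ phi).
Notation ppk phi := (pp_k _ _ phi).
Notation ppA phi := (pp_A _ _ phi).
Notation ppB phi := (pp_B _ _ phi).
Section PP.
Variable R : pzRingType.

Definition catv (M : Type) n m (x : 'I_n -> M) (y : 'I_m -> M) : 'I_(n+m) -> M :=
  fun l => match split l with inl a => x a | inr b => y b end.
Arguments catv {M n m}.
Lemma catvl (M : Type) n m (x : 'I_n -> M) (y : 'I_m -> M) a : catv x y (lshift m a) = x a.
Proof. by rewrite /catv (@unsplitK n m (inl a)). Qed.
Lemma catvr (M : Type) n m (x : 'I_n -> M) (y : 'I_m -> M) a : catv x y (rshift n a) = y a.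
Proof. by rewrite /catv (@unsplitK n m (inr a)). Qed.

Definition ppdef n (Q : forall M : lmodType R, ('I_n -> M) -> Prop) :=
  exists phi : ppf R n, forall (M : lmodType R) (x : 'I_n -> M), PH phi x <-> Q M x.

Arguments ppdef {n}.
Lemma ppdef_eqv n (Q Q' : forall M : lmodType R, ('I_n -> M) -> Prop) :
  ppdef Q -> (forall M x, Q M x <-> Q' M x) -> ppdef Q'.
Proof.
case=> phi H E; exists phi => M x; rewrite H; exact: E.
Qed.

Arguments ppdef_eqv {n Q Q'}.
Lemma ppdef_lin n k (A : 'M[R]_(k, n)) :
  ppdef (fun M x => forall i, \sum_j A i j *: x j = 0).
Proof.
exists (@PPF R n k 0 A 0) => M x; split.
- case=> y Hy i; move: (Hy i); rewrite /= big_ord0.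
  by rewrite addr0.
- by move=> Hx; exists (fun _ => 0) => i /=; rewrite big_ord0 addr0; exact: Hx.
Qed.

Arguments ppdef_lin {n k}.
Lemma ppdef_conj n (Q1 Q2 : forall M : lmodType R, ('I_n -> M) -> Prop) :
  ppdef Q1 -> ppdef Q2 -> ppdef (fun M x => Q1 M x /\ Q2 M x).
Proof.
case=> [[k1 m1 A1 B1] H1] [[k2 m2 A2 B2] H2].
exists (@PPF R n (k1 + k2) (m1 + m2) (col_mx A1 A2) (block_mx B1 0 0 B2)) => M x.
split.
- case=> y Hy; split.
  + apply/H1; exists (fun l => y (lshift m2 l)) => i /=.
    move: (Hy (lshift k2 i)); rewrite /= big_split_ord /=.
    under eq_bigr do rewrite col_mxEu.
    under [X in _ + (X + _)]eq_bigr do rewrite block_mxEul.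
    under [X in _ + (_ + X)]eq_bigr do rewrite block_mxEur mxE scale0r.
    by rewrite big1_eq addr0.
  + apply/H2; exists (fun l => y (rshift m1 l)) => i /=.
    move: (Hy (rshift k1 i)); rewrite /= big_split_ord /=.
    under eq_bigr do rewrite col_mxEd.
    under [X in _ + (X + _)]eq_bigr do rewrite block_mxEdl mxE scale0r.
    under [X in _ + (_ + X)]eq_bigr do rewrite block_mxEdr.
    by rewrite big1_eq add0r.
- case=> /H1 [y1 Hy1] /H2 [y2 Hy2]; exists (catv y1 y2) => i /=.
  rewrite -(splitK i); case: (split i) => [i1|i2] /=; rewrite big_split_ord /=.
  + under eq_bigr do rewrite col_mxEu.
    under [X in _ + (X + _)]eq_bigr do rewrite block_mxEul catvl.
    under [X in _ + (_ + X)]eq_bigr do rewrite block_mxEur mxE scale0r.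
    by rewrite big1_eq addr0; exact: Hy1.
  + under eq_bigr do rewrite col_mxEd.
    under [X in _ + (X + _)]eq_bigr do rewrite block_mxEdl mxE scale0r.
    under [X in _ + (_ + X)]eq_bigr do rewrite block_mxEdr catvr.
    by rewrite big1_eq add0r; exact: Hy2.
Qed.

Arguments ppdef_conj {n Q1 Q2}.
Lemma ppdef_ex n m' (Q : forall M : lmodType R, ('I_(n + m') -> M) -> Prop) :
  ppdef Q -> ppdef (fun M x => exists y : 'I_m' -> M, Q M (catv x y)).
Proof.
case=> [[k m A B] H].
exists (@PPF R n k (m' + m) (lsubmx A) (row_mx (rsubmx A) B)) => M x.
have E : forall (y : 'I_m' -> M) (z : 'I_m -> M) i,
  \sum_(j < n + m') A i j *: catv x y j + \sum_(l < m) B i l *: z l =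
  \sum_(j < n) lsubmx A i j *: x j + \sum_(l < m' + m) row_mx (rsubmx A) B i l *: catv y z l.
  move=> y z i; rewrite !big_split_ord /= -!addrA; congr (_ + _).
    by apply: eq_bigr => j _; rewrite catvl mxE.
  congr (_ + _); first by apply: eq_bigr => j _; rewrite catvr row_mxEl mxE catvl.
  by apply: eq_bigr => j _; rewrite row_mxEr catvr.
split.
- case=> w Hw; exists (fun l => w (lshift m l)); apply/H.
  exists (fun l => w (rshift m' l)) => i /=; rewrite E.
  have -> : catv (fun l => w (lshift m l)) (fun l => w (rshift m' l)) = w.
    by apply: functional_extensionality_dep => l; rewrite -(splitK l); case: (split l) => a /=; rewrite ?catvl ?catvr.
  exact: Hw.
- case=> y /H [z Hz]; exists (catv y z) => i /=; rewrite -E; exact: Hz.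
Qed.

Arguments ppdef_ex {n m' Q}.
Lemma ppdef_reidx n n2 (s : 'I_n -> 'I_n2) (Q : forall M : lmodType R, ('I_n -> M) -> Prop) :
  ppdef Q -> ppdef (fun M (x : 'I_n2 -> M) => Q M (fun j => x (s j))).
Proof.
case=> [[k m A B] H].
exists (@PPF R n2 k m (\matrix_(i, j2) \sum_(j | s j == j2) A i j) B) => M x.
have E : forall i, \sum_(j2 < n2) (\matrix_(i, j2) \sum_(j | s j == j2) A i j) i j2 *: x j2
   = \sum_(j < n) A i j *: x (s j).
  move=> i; rewrite (partition_big s xpredT) //=; apply: eq_bigr => j2 _.
  rewrite mxE scaler_suml; apply: eq_bigr => j /eqP <-; by [].
split.
- case=> y Hy; apply/H; exists y => i; rewrite /= -E; exact: Hy.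
- case/H=> y Hy; exists y => i; rewrite /= E; exact: Hy.
Qed.

Arguments ppdef_reidx {n n2} s {Q}.
Lemma ppdef_eqs n (phi : ppf R n) :
  ppdef (fun M (y : 'I_(n + ppm phi) -> M) =>
     PE phi (fun a => y (lshift _ a)) (fun b => y (rshift _ b))).
Proof.
apply: (ppdef_eqv (ppdef_lin (row_mx (ppA phi) (ppB phi)))) => M y.
by split=> H i; move: (H i); rewrite big_split_ord /= => E; apply: (etrans _ E);
  congr (_ + _); apply: eq_bigr => j _; rewrite ?row_mxEl ?row_mxEr.
Qed.

Lemma ppdef_subst N n (L : 'M[R]_(N, n)) (Q : forall M : lmodType R, ('I_N -> M) -> Prop) :
  ppdef Q -> ppdef (fun M (x : 'I_n -> M) => Q M (fun i => \sum_j L i j *: x j)).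
Proof.
move=> HQ.
have H1 := ppdef_lin (row_mx (- L) 1%:M).
have H2 := ppdef_reidx (@rshift n N) HQ.
have H3 := ppdef_ex (ppdef_conj H1 H2).
apply: (ppdef_eqv H3) => M x /=.
have E : forall w : 'I_N -> M, forall i, \sum_(j < n + N) row_mx (- L) 1%:M i j *: catv x w j
   = - (\sum_j L i j *: x j) + w i.
  move=> w i; rewrite big_split_ord /=; congr (_ + _).
    rewrite -sumrN; apply: eq_bigr => j _; by rewrite row_mxEl catvl mxE scaleNr.
  rewrite (bigD1 i) //= row_mxEr catvr mxE eqxx scale1r big1 ?addr0 //.
  by move=> j /negbTE nij; rewrite row_mxEr mxE eq_sym nij scale0r.
split.
- case=> w [Hl Hq]; move: Hq.
  have -> : (fun j => catv x w (rshift n j)) = (fun i => \sum_j L i j *: x j).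
    apply: functional_extensionality_dep => i; rewrite catvr.
    by move: (Hl i); rewrite E addrC => /eqP; rewrite subr_eq0 => /eqP.
  by [].
- move=> Hq; exists (fun i => \sum_j L i j *: x j); split.
    by move=> i; rewrite E addNr.
  have -> : (fun j => catv x (fun i => \sum_j L i j *: x j) (rshift n j)) = (fun i => \sum_j L i j *: x j).
    by apply: functional_extensionality_dep => i; rewrite catvr.
  by [].
Qed.

Arguments ppdef_subst {N n} L {Q}.
End PP.
Arguments catv {M n m}. Arguments catvl {M n m}. Arguments catvr {M n m}.
Arguments ppdef {R n}. Arguments ppdef_eqv {R n Q Q'}. Arguments ppdef_lin {R n k}.
Arguments ppdef_conj {R n Q1 Q2}. Arguments ppdef_ex {R n m' Q}.
Arguments ppdef_reidx {R n n2} s {Q}. Arguments ppdef_subst {R N n} L {Q}.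
Arguments ppdef_eqs {R n}.

Section Lin.
Variables (R : pzRingType) (U V : lmodType R) (f : U -> V) (Hf : is_linear f).
Lemma lin0 : f 0 = 0.
Proof. by apply/eqP; rewrite -(addrI (f 0) (_ : f 0 + f 0 = f 0 + 0)) // addr0 -{1}(scale1r (f 0)) -Hf scale1r addr0. Qed.
Lemma linD x y : f (x + y) = f x + f y.
Proof. by rewrite -{1}(scale1r x) Hf scale1r. Qed.
Lemma linZ a x : f (a *: x) = a *: f x.
Proof. by rewrite -(addr0 (a *: x)) Hf lin0 addr0. Qed.
Lemma linN x : f (- x) = - f x.
Proof. by rewrite -scaleN1r linZ scaleN1r. Qed.
Lemma linB x y : f (x - y) = f x - f y.
Proof. by rewrite linD linN. Qed.
Lemma lin_sum (I : Type) (r : seq I) (P : pred I) (F : I -> U) :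
  f (\sum_(i <- r | P i) F i) = \sum_(i <- r | P i) f (F i).
Proof. exact: (big_morph f linD lin0). Qed.
End Lin.
Arguments lin0 {R U V f}. Arguments linD {R U V f}. Arguments linZ {R U V f}.
Arguments linN {R U V f}. Arguments linB {R U V f}. Arguments lin_sum {R U V f}.

Lemma pp_map (R : pzRingType) (U V : lmodType R) (f : U -> V) n (phi : ppf R n) (x : 'I_n -> U) :
  is_linear f -> PH phi x -> PH phi (fun j => f (x j)).
Proof.
move=> Hf [y Hy]; exists (fun l => f (y l)) => i.
have := congr1 f (Hy i); rewrite (lin0 Hf) (linD Hf) !(lin_sum Hf) => E.
apply: (etrans _ E).
by congr (_ + _); apply: eq_bigr => j _; rewrite (linZ Hf).
Qed.

Lemma sum_id (R : pzRingType) (M : lmodType R) k (t : 'I_k -> M) i :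
  \sum_j (1%:M : 'M[R]_k) i j *: t j = t i.
Proof.
rewrite (bigD1 i) //= mxE eqxx scale1r big1 ?addr0 //.
by move=> j /negbTE nij; rewrite mxE eq_sym nij scale0r.
Qed.

Lemma pure_from_lift (R : pzRingType) (U V : lmodType R) (g : U -> V) :
  is_linear g ->
  (forall n (chi : ppf R n) (b : 'I_n -> V), PH chi b ->
     exists u : 'I_n -> U, (forall a, g (u a) = b a) /\ PH chi u) ->
  pure_epi g.
Proof.
move=> Hg Hl; split => //.
- move=> v; pose chi1 := @PPF R 1 0 0 0 0.
  have H : PH chi1 (fun _ => v) by exists (fun _ => 0) => -[].
  have [u [Hu _]] := Hl 1 chi1 (fun _ => v) H.
  by exists (u ord0); exact: Hu.
- move=> n phi a Ha [v Hv].
  pose w := fun l => g (v l).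
  pose chi' := @PPF R (ppm phi) (ppk phi) 0 (ppB phi) 0.
  have H : PH chi' w.
    exists (fun _ => 0) => i /=; rewrite big_ord0 addr0.
    have := congr1 g (Hv i); rewrite (lin0 Hg) (linD Hg) !(lin_sum Hg) => E.
    apply: (etrans _ E); rewrite [X in _ = X + _]big1 ?add0r; last by move=> j _; rewrite (linZ Hg) Ha scaler0.
    by apply: eq_bigr => l _; rewrite (linZ Hg).
  have [v2 [Hv2 [z Hc]]] := Hl _ chi' w H.
  exists (fun l => v l - v2 l); split.
    by move=> l; rewrite (linB Hg) Hv2 subrr.
  move=> i; have := Hv i; have := Hc i; rewrite /= big_ord0 addr0 => E2 E1.
  apply: (etrans _ (etrans (congr2 (fun x y => x - y) E1 E2) (subrr 0))).
  rewrite -addrA; congr (_ + _); rewrite -sumrB; apply: eq_bigr => l _; by rewrite scalerBr.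
Qed.

Section Core.
Variables (R : pzRingType) (P : lmodType R).

Record Jt := MkJ { jn : nat; jchi : ppf R jn; jb : 'I_jn -> P;
  jw : 'I_(pp_m R jn jchi) -> P; jok : pp_eqs jchi P jb jw }.
HB.instance Definition _ := gen_eqMixin Jt.
HB.instance Definition _ := gen_choiceMixin Jt.
Definition sz (j : Jt) := (jn j + ppm (jchi j))%N.
Definition Eqs {M : lmodType R} (j : Jt) (y : 'I_(sz j) -> M) :=
  PE (jchi j) (fun a => y (lshift _ a)) (fun b => y (rshift _ b)).
Definition LinC {M : lmodType R} (js : seq Jt) (c : Jt -> nat -> R)
  (b : forall j, 'I_(sz j) -> M) : M := \sum_(j <- js) \sum_(l < sz j) c j l *: b j l.

Lemma gen_ppdef N (T : 'I_N -> Jt -> nat -> R) js : uniq js ->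
  ppdef (fun M (z : 'I_N -> M) => exists b : forall j, 'I_(sz j) -> M,
     (forall j, j \in js -> Eqs j (b j)) /\ forall i, z i = LinC js (T i) b).
Proof.
elim: js => [_|j js IH /andP [nj ujs]].
  apply: (ppdef_eqv (ppdef_lin (1%:M : 'M[R]_N))) => M z; split.
  - move=> H; exists (fun _ _ => 0); split => // i; rewrite /LinC big_nil.
    by move: (H i); rewrite sum_id.
  - by case=> b [_ H] i; rewrite sum_id H /LinC big_nil.
pose L := row_mx (1%:M : 'M[R]_N) (\matrix_(i < N, l < sz j) - T i j l).
have HE := ppdef_reidx (@rshift N (sz j)) (ppdef_eqs (jchi j)).
have HS := ppdef_subst L (IH ujs).
have H3 := ppdef_ex (ppdef_conj HE HS).
apply: (ppdef_eqv H3) => M z /=.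
have Esub : forall (y : 'I_(sz j) -> M) i,
    \sum_(l < N + sz j) L i l *: catv z y l = z i - \sum_(l < sz j) T i j l *: y l.
  move=> y i; rewrite big_split_ord /=; congr (_ + _).
    by under eq_bigr do rewrite row_mxEl catvl; rewrite sum_id.
  by rewrite -sumrN; apply: eq_bigr => l _; rewrite row_mxEr catvr mxE scaleNr.
have Ey : forall y : 'I_(sz j) -> M,
  PE (jchi j) (fun a => catv z y (rshift N (lshift _ a))) (fun b => catv z y (rshift N (rshift _ b)))
  = Eqs j y.
  move=> y; rewrite /Eqs; congr (PE (jchi j) _ _);
  by apply: functional_extensionality_dep => a; rewrite catvr.
split.
- case=> y []; rewrite Ey => Hy [b [Hb Hz]].
  exists (dfwith b y); split.
    move=> j'; rewrite inE; case/orP => [/eqP -> | Hj']; first by rewrite dfwith_in.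
    have nj' : j != j' by apply: contraNneq nj => ->.
    by rewrite dfwith_out //; exact: Hb.
  move=> i; rewrite /LinC big_cons dfwith_in.
  have -> : \sum_(j0 <- js) \sum_(l < sz j0) T i j0 l *: dfwith b y j0 l = LinC js (T i) b.
    rewrite /LinC big_seq_cond [RHS]big_seq_cond; apply: eq_bigr => j' /andP [Hj' _].
    have nj' : j != j' by apply: contraNneq nj => ->.
    by rewrite dfwith_out.
  by rewrite -Hz Esub addrC subrK.
- case=> b [Hb Hz]; exists (b j); split; first by rewrite Ey; apply: Hb; rewrite inE eqxx.
  exists b; split; first by move=> j' Hj'; apply: Hb; rewrite inE Hj' orbT.
  move=> i; rewrite Esub Hz /LinC big_cons addrC addKr.
  done.
Qed.


Lemma Eqs0 (M : lmodType R) j : Eqs j (fun _ => 0 : M).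
Proof. by move=> i; rewrite !big1 ?addr0 // => l _; rewrite scaler0. Qed.

Definition comb {M : lmodType R} (rep : seq (Jt * (nat -> R))) (b : forall j, 'I_(sz j) -> M) : M :=
  \sum_(x <- rep) \sum_(l < sz x.1) x.2 l *: b x.1 l.

Lemma comb_lin (U V : lmodType R) (f : U -> V) rep b : is_linear f ->
  f (comb rep b) = comb rep (fun j l => f (b j l)).
Proof.
move=> Hf; rewrite /comb (lin_sum Hf); apply: eq_bigr => x _.
by rewrite (lin_sum Hf); apply: eq_bigr => l _; rewrite (linZ Hf).
Qed.

Lemma LinC_lin (U V : lmodType R) (f : U -> V) js c b : is_linear f ->
  f (LinC js c b) = LinC js c (fun j l => f (b j l)).
Proof.
move=> Hf; rewrite /LinC (lin_sum Hf); apply: eq_bigr => x _.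
by rewrite (lin_sum Hf); apply: eq_bigr => l _; rewrite (linZ Hf).
Qed.

Lemma comb_LinC (M : lmodType R) rep js (b : forall j, 'I_(sz j) -> M) : uniq js ->
  (forall x, x \in rep -> x.1 \in js) ->
  comb rep b = LinC js (fun j l => \sum_(x <- rep | x.1 == j) x.2 l) b.
Proof.
move=> ujs Hin; rewrite /LinC.
pose G (x : Jt * (nat -> R)) := \sum_(l < sz x.1) x.2 l *: b x.1 l.
have E1 : forall j, \sum_(l < sz j) (\sum_(x <- rep | x.1 == j) x.2 l) *: b j l
    = \sum_(x <- rep) (if x.1 == j then G x else 0).
  move=> j.
  transitivity (\sum_(l < sz j) \sum_(x <- rep) (if x.1 == j then x.2 l *: b j l else 0)).
    apply: eq_bigr => l _; rewrite big_mkcond scaler_suml; apply: eq_bigr => x _.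
    by case: ifP => // _; rewrite scale0r.
  rewrite exchange_big; apply: eq_bigr => x _; case: eqP => [Ex|_]; last by rewrite big1.
  by rewrite /G; subst j.
rewrite (eq_bigr _ (fun j _ => E1 j)) exchange_big /comb.
apply: eq_big_seq => x Hx; symmetry.
rewrite -big_mkcond (big_rem x.1) ?Hin // eqxx big1_seq; first by rewrite /= addr0.
by move=> y /andP [/eqP <-]; rewrite mem_rem_uniqF.
Qed.

Record Kt := MkK { kN : nat; kjs : seq Jt; kT : 'I_kN -> Jt -> nat -> R; kpsi : ppf R kN }.
Record Rlz := MkR { rM : lmodType R; rb : forall j, 'I_(sz j) -> rM }.
Definition CX (k : Kt) (r : Rlz) := (forall j, Eqs j (rb r j)) /\
  ~ pp_holds (kpsi k) (rM r) (fun i => LinC (kjs k) (kT k i) (rb r)).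
Definition cx (k : Kt) : Rlz :=
  match pselect (exists r, CX k r) with
  | left H => proj1_sig (cid H)
  | right _ => @MkR P (fun _ _ => 0) end.
Lemma cx_eqs k j : Eqs j (rb (cx k) j).
Proof.
rewrite /cx; case: pselect => [H|_]; last exact: Eqs0.
by case: (proj2_sig (cid H)) => Hj _; exact: Hj.
Qed.
Lemma cx_cx k : (exists r, CX k r) -> CX k (cx k).
Proof.
move=> H; rewrite /cx; case: pselect => [H'|//].
exact: (proj2_sig (cid H')).
Qed.

Definition Nf (o : option Kt) : lmodType R :=
  match o with None => P | Some k => rM (cx k) end.
Definition D : lmodType R := dprod Nf.
Definition jv j : 'I_(sz j) -> P := catv (jb j) (jw j).
Definition gen j l : D := fun o =>
  match o as o0 return Nf o0 with None => jv j l | Some k => rb (cx k) j l end.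
Lemma gen_eqs j o : Eqs j (fun l => gen j l o).
Proof.
case: o => [k|]; first exact: cx_eqs.
move=> i; rewrite /gen /jv /=.
under eq_bigr do rewrite catvl. under [X in _ + X]eq_bigr do rewrite catvr.
exact: jok.
Qed.

Definition inU (w : D) := exists rep, w = comb rep gen.
Lemma inU0 : inU 0.
Proof. by exists [::]; rewrite /comb big_nil. Qed.
Lemma inUD a x y : inU x -> inU y -> inU (a *: x + y).
Proof.
case=> r1 -> [r2 ->]; exists ([seq (e.1, fun l => a * e.2 l) | e <- r1] ++ r2).
rewrite /comb big_cat big_map /= scaler_sumr; congr (_ + _); apply: eq_bigr => e _.
by rewrite scaler_sumr; apply: eq_bigr => l _; rewrite scalerA.
Qed.
Definition U : lmodType R := subm inU0 inUD.
Definition gU (u : U) : P := smv u None.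
Lemma smv_lin : is_linear (smv : U -> D).
Proof. by move=> a x y; rewrite smval_add smval_scale. Qed.
Lemma proj_lin o : is_linear (fun w : D => w o).
Proof. by []. Qed.
Lemma gU_lin : is_linear gU.
Proof. by move=> a x y; rewrite /gU smv_lin. Qed.


Lemma elt_in j (l : 'I_(sz j)) : `[< inU (gen j l) >].
Proof.
apply/asboolP; exists [:: (j, fun l' => if l' == nat_of_ord l then 1 else 0)].
rewrite /comb big_cons big_nil addr0 /= (bigD1 l) //= eqxx scale1r big1 ?addr0 //.
move=> l' nl; have -> : (nat_of_ord l' == nat_of_ord l) = false by exact: negbTE nl.
by rewrite scale0r.
Qed.
Definition elt j l : U := @smk _ _ _ inU0 inUD _ (elt_in j l).

Lemma lift_gU n (chi : ppf R n) (b : 'I_n -> P) : PH chi b ->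
  exists u : 'I_n -> U, (forall a, gU (u a) = b a) /\ PH chi u.
Proof.
case=> w Hw; pose j := @MkJ n chi b w Hw.
exists (fun a => elt j (lshift _ a)); split.
  by move=> a; rewrite /gU /= /jv catvl.
exists (fun l => elt j (rshift _ l)) => i.
apply: sm_inj; rewrite smval_0 (linD smv_lin) !(lin_sum smv_lin).
under eq_bigr do rewrite (linZ smv_lin).
under [X in _ + X]eq_bigr do rewrite (linZ smv_lin).
apply: functional_extensionality_dep => o.
rewrite dpE_add !evalD_sum; exact: (gen_eqs j o i).
Qed.

Lemma core_sec : pure_projective P -> forall n0 (s0 : 'I_n0 -> P),
  exists phi' : ppf R n0, PH phi' s0 /\
    forall psi, PH psi s0 -> pp_le (fun _ => True) n0 phi' psi.
Proof.
move=> Ppp n0 s0.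
have gpure : pure_epi gU := pure_from_lift _ _ _ gU gU_lin lift_gU.
have [h [Hh hK]] := Ppp U P gU gpure (fun x => x) (fun a x y => erefl).
pose u i := h (s0 i).
have : forall i, exists rep, smv (u i) = comb rep gen.
  by move=> i; move/asboolP: (proj2_sig (u i)).
case/(@choice _ _) => rep Hrep.
pose js := undup (flatten [seq [seq x.1 | x <- rep i] | i <- enum 'I_n0]).
have ujs : uniq js := undup_uniq _.
have Hin : forall i x, x \in rep i -> x.1 \in js.
  move=> i x Hx; rewrite mem_undup; apply/flattenP; exists [seq x.1 | x <- rep i].
    by apply: map_f; rewrite mem_enum.
  exact: map_f.
pose T i j l := \sum_(x <- rep i | x.1 == j) x.2 l.
have Eu : forall (M : lmodType R) (f : D -> M), is_linear f -> forall i,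
    f (smv (u i)) = LinC js (T i) (fun j l => f (gen j l)).
  move=> M f Hf i; rewrite Hrep (comb_lin _ _ _ _ _ Hf) (comb_LinC _ _ _ _ ujs) //.
  exact: Hin.
have [phi' Hphi'] := gen_ppdef n0 T js ujs.
exists phi'; split.
- apply/Hphi'; exists jv; split.
    by move=> j _; exact: (gen_eqs j None).
  move=> i; rewrite -{1}(hK (s0 i)).
  exact: (Eu _ _ (proj_lin None) i).
- move=> psi Hpsi N _ x Hx; case: (pselect (PH psi x)) => // Hn; exfalso.
  case/Hphi': Hx => b [Hb Hxb].
  pose k := @MkK n0 js T psi.
  have Hex : exists r, CX k r.
    exists (@MkR N (fun j => if j \in js then b j else fun _ => 0)); split.
      by move=> j /=; case: ifP => Hj; [exact: Hb | exact: Eqs0].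
    rewrite /=.
    have -> : (fun i => LinC js (T i) (fun j => if j \in js then b j else fun _ => 0)) = x.
      apply: functional_extensionality_dep => i; rewrite Hxb /LinC big_seq [RHS]big_seq.
      by apply: eq_bigr => j Hj; rewrite Hj.
    exact: Hn.
  have [_ Hcx] := cx_cx k Hex; apply: Hcx.
  have H1 := pp_map _ _ _ h n0 psi s0 Hh Hpsi.
  have H2 := pp_map _ _ _ smv n0 psi _ smv_lin H1.
  have H3 := pp_map _ _ _ (fun w : D => w (Some k)) n0 psi _ (proj_lin (Some k)) H2.
  move: H3; congr (pp_holds psi _ _).
  apply: functional_extensionality_dep => i.
  exact: (Eu _ _ (proj_lin (Some k)) i).
Qed.

End Core.

Lemma pure_lift (R : pzRingType) (U V : lmodType R) (p : U -> V) n (phi : ppf R n) (m : 'I_n -> V) :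
  pure_epi p -> PH phi m -> exists u : 'I_n -> U, (forall j, p (u j) = m j) /\ PH phi u.
Proof.
case=> Hl Hs Hk [y Hy].
have [u0 Hu0] := @choice _ _ (fun j v => p v = m j) (fun j => Hs (m j)).
have [v0 Hv0] := @choice _ _ (fun l v => p v = y l) (fun l => Hs (y l)).
pose kk := fun i => \sum_j ppA phi i j *: u0 j + \sum_l ppB phi i l *: v0 l.
have pk : forall i, p (kk i) = 0.
  move=> i; rewrite /kk (linD Hl) !(lin_sum Hl).
  under eq_bigr do rewrite (linZ Hl) Hu0.
  under [X in _ + X]eq_bigr do rewrite (linZ Hl) Hv0.
  exact: Hy.
pose chi := @PPF R (ppk phi) (ppk phi) (n + ppm phi) 1%:M (- row_mx (ppA phi) (ppB phi)).
have Ecat : forall (a : 'I_n -> U) (b : 'I_(ppm phi) -> U) i,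
   \sum_(l < n + ppm phi) (- row_mx (ppA phi) (ppB phi)) i l *: catv a b l
   = - (\sum_j ppA phi i j *: a j + \sum_l ppB phi i l *: b l).
  move=> a b i; rewrite big_split_ord opprD -!sumrN; congr (_ + _); apply: eq_bigr => j _;
  by rewrite mxE ?row_mxEl ?row_mxEr ?catvl ?catvr scaleNr.
have Hchi : PH chi kk.
  by exists (catv u0 v0) => i /=; rewrite sum_id Ecat subrr.
have [w [Hw0 Hw]] := Hk _ chi kk pk Hchi.
have Ew : w = catv (fun j => w (lshift (ppm phi) j)) (fun l => w (rshift n l)).
  by apply: functional_extensionality_dep => l; rewrite -(splitK l); case: (split l) => a /=;
    rewrite ?catvl ?catvr.
exists (fun j => u0 j - w (lshift _ j)); split.
  by move=> j; rewrite (linB Hl) Hu0 Hw0 subr0.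
exists (fun l => v0 l - w (rshift _ l)) => i.
have Ei := Ecat (fun j => w (lshift _ j)) (fun l => w (rshift _ l)) i.
rewrite -Ew in Ei.
move: (Hw i); rewrite /= sum_id Ei => E; apply: (etrans _ E).
rewrite /kk opprD addrACA -!sumrB; congr (_ + _); apply: eq_bigr => j _; by rewrite scalerBr.
Qed.

Lemma dsum_pproj (R : pzRingType) (I : Type) (B : I -> lmodType R) (S : lmodType R)
  (iota : forall i, B i -> S) :
  is_dsum iota -> (forall i, pure_projective (B i)) -> pure_projective S.
Proof.
case=> Hio Hu Hp U V g Hg f Hf.
case: (Hg) => Hgl _ _.
have Hfi : forall i, is_linear (fun x => f (iota i x)).
  by move=> i a x y; rewrite Hio Hf.
have H : forall i, exists h : B i -> U, is_linear h /\ forall x, g (h x) = f (iota i x).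
  by move=> i; apply: (Hp i _ _ g Hg).
pose h := fun i => proj1_sig (cid (H i)).
have Hh : forall i, is_linear (h i) /\ forall x, g (h i x) = f (iota i x).
  by move=> i; exact: (proj2_sig (cid (H i))).
have [G [HG HGi _]] := Hu U h (fun i => (Hh i).1).
exists G; split => // s.
have [g0 [_ _ Huniq]] := Hu V (fun i x => f (iota i x)) Hfi.
rewrite (Huniq (fun s => g (G s))) ?(Huniq f) //.
- by move=> a x y; rewrite HG Hgl.
- by move=> i x; rewrite HGi (Hh i).2.
Qed.

Lemma id_pure (R : pzRingType) (S : lmodType R) : pure_epi (fun x : S => x).
Proof.
split; first by [].
- by move=> v; exists v.
- move=> n phi a Ha _; exists (fun _ => 0); split => // i.
  rewrite big1 ?big1 ?addr0 // => j _; rewrite ?Ha scaler0 //.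
Qed.



Arguments dsum_pproj {R I B S iota}. Arguments pure_lift {R U V p n phi m}.

Theorem theorem5p10 (R : pzRingType) (L : mclass R) :
  purely_resolving L ->
  forall M : lmodType R, L M -> atomic L M -> mittag_leffler M.
Proof.
case=> Bc [Hpp _ HL] M LM Hat n m.
have [I [B [S [iota [p [HB [Hds Hpe]]]]]]] := (HL M).1 LM.
have SL : L S.
  by apply/(HL S); exists I, B, S, iota, (fun x => x); split => //; split => //; exact: id_pure.
have Spp : pure_projective S := dsum_pproj Hds (fun i => Hpp _ (HB i)).
have [phi [Hphi Hmin]] := Hat n m.
have [s [Hs Hphis]] := pure_lift Hpe Hphi.
have [phi' [Hphi' Hgen]] := core_sec _ _ Spp n s.
exists phi'; split.
  case: (Hpe) => Hpl _ _; have := pp_map _ _ _ p n phi' s Hpl Hphi'.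
  have -> // : (fun j => p (s j)) = m by apply: functional_extensionality_dep.
move=> psi Hpsi; apply: Hgen; exact: (Hmin psi Hpsi S SL s Hphis).
Qed.
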